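(* Suppose $\mathcal L\subsetneq\mathcal K\subseteq\{1,\dots,n\}$ and $Q$ is a prime ideal of $R$ containing $L_{\mathcal L}+I(A_{\mathcal K})$. Then there is some $\mathcal K'$ with $\mathcal L\subseteq\mathcal K'\subseteq\mathcal K$ and $|\mathcal K'|+1=|\mathcal K|$ such that $L_{\mathcal K'}\subseteq Q$.
   Context: $\mathbb K$ is a field, $R=\mathbb K[x_{i_1,\dots,i_n}:1\le i_j\le a_j]$, $A=(x_{i_1,\dots,i_n})$ the generic table. For a tuple $\sigma$ with $\sigma_j\in\{1,\dots,a_j\}\cup\{+\}$, $x_\sigma$ is the sum of all $x_{i_1,\dots,i_n}$ with $i_j=\sigma_j$ whenever $\sigma_j\ne+$. For $\mathscr J=\{j_1<\dots<j_m\}\subseteq\{1,\dots,n\}$ the margin $A_{\mathscr J}$ is the table whose $(i_1,\dots,i_m)$ entry is $x_\sigma$ with $\sigma_{j_r}=i_r$, $\sigma_j=+$ for $j\notin\mathscr J$; $L_{\mathscr J}$ is the ideal generated by the entries of $A_{\mathscr J}$. For a table $B$ with entries in $R$, $I(B)$ is the ideal generated by its generalized $2\times2$ minors $\det\begin{pmatrix} b_{i_1,\dots,i_m} & b_{j_1,\dots,j_{l-1},i_l,j_{l+1},\dots,j_m}\\ b_{i_1,\dots,i_{l-1},j_l,i_{l+1},\dots,i_m} & b_{j_1,\dots,j_m}\end{pmatrix}$. *)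

(* Defs.v *)
From HB Require Import structures.
From mathcomp Require Import all_boot all_algebra.
From mathcomp Require Import mpoly.
Set Implicit Arguments. Unset Strict Implicit. Unset Printing Implicit Defensive.
Import GRing.Theory.
Local Open Scope ring_scope.

(* Index tuples (i_1,...,i_n) with i_j in {1..a_j}, 0-based: i_j : 'I_(a j). *)
Definition cell (n : nat) (a : 'I_n -> nat) : finType :=
  {dffun forall j : 'I_n, 'I_(a j)}.

(* R = K[x_t : t cell]: multivariate polynomials in #|cell| variables,
   the variable x_t being 'X_(enum_rank t). *)
Notation tabring K a := {mpoly K[#|cell a|]}.

Definition xvar (K : fieldType) (n : nat) (a : 'I_n -> nat) (t : cell a)
  : tabring K a := 'X_(enum_rank t).

(* Entry of the margin A_J at the index determined by s on J:
   sum of all x_t with t_j = s_j for all j in J. *)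
Definition margin_entry (K : fieldType) (n : nat) (a : 'I_n -> nat)
  (J : {set 'I_n}) (s : cell a) : tabring K a :=
  \sum_(t : cell a | [forall j in J, t j == s j]) xvar K t.

Definition ideal_gen (R : comNzRingType) (G : R -> Prop) (p : R) : Prop :=
  exists (m : nat) (c g : 'I_m -> R),
    (forall i, G (g i)) /\ p = \sum_(i < m) c i * g i.

Definition margin_gens (K : fieldType) (n : nat) (a : 'I_n -> nat)
  (J : {set 'I_n}) (p : tabring K a) : Prop :=
  exists s : cell a, p = margin_entry K J s.

Definition swapc (n : nat) (a : 'I_n -> nat) (l : 'I_n) (s t : cell a)
  : cell a := [ffun j => if j == l then s j else t j].

(* Generators of I(A_J): generalized 2x2 minors
   b_s b_t - b_{t with l-th coord of s} b_{s with l-th coord of t}, l in J. *)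
Definition minor_gens (K : fieldType) (n : nat) (a : 'I_n -> nat)
  (J : {set 'I_n}) (p : tabring K a) : Prop :=
  exists (s t : cell a) (l : 'I_n), l \in J /\
    p = margin_entry K J s * margin_entry K J t
        - margin_entry K J (swapc l s t) * margin_entry K J (swapc l t s).

Definition prime_ideal (R : comNzRingType) (Q : R -> Prop) : Prop :=
  [/\ Q 0,
      (forall x y, Q x -> Q y -> Q (x + y)),
      (forall r x, Q x -> Q (r * x)),
      ~ Q 1 &
      (forall x y, Q (x * y) -> Q x \/ Q y)].

(* Main.v *)
Require Import Defs.
From HB Require Import structures.
From mathcomp Require Import all_boot all_algebra.
From mathcomp Require Import mpoly.
From Stdlib Require Import Classical.
Import GRing.Theory.
Set Implicit Arguments. Unset Strict Implicit.
Local Open Scope ring_scope.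

Definition agree_off n (a : 'I_n -> nat) (k : 'I_n) (c e : cell a) : bool :=
  [forall j, (j != k) ==> (c j == e j)].

Lemma margin_split (KK : fieldType) n (a : 'I_n -> nat) (J : {set 'I_n}) k
  (s e : cell a) : k \notin J ->
  margin_entry KK J s =
  \sum_(c | agree_off k c e) margin_entry KK (k |: J) (swapc k c s).
Proof.
move=> kJ; rewrite /margin_entry.
rewrite (exchange_big_dep (fun t : cell a => [forall j in J, t j == s j])) /=; last first.
  move=> c t _ /forallP H; apply/forallP => j; apply/implyP => jJ.
  have := H j; rewrite in_setU1 jJ orbT /= ffunE.
  by have -> : (j == k) = false by apply/negbTE; apply: contraNneq kJ => <-.
apply: eq_bigr => t /forallP Ht.
rewrite (big_pred1 (swapc k t e)) // => c /=.
apply/andP/eqP.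
  case=> /forallP H1 /forallP H2; apply/ffunP => j; rewrite ffunE.
  case: (eqVneq j k) => [?|ne].
    subst j; have := H2 k; rewrite setU11 /= ffunE eqxx => /eqP ->; by [].
  by have := H1 j; rewrite ne /= => /eqP.
move=> ->; split.
  apply/forallP => j; apply/implyP => ne; by rewrite ffunE (negbTE ne).
apply/forallP => j; apply/implyP; rewrite in_setU1 => /orP [/eqP ?|jJ].
  by subst j; rewrite !ffunE eqxx.
have jk : (j == k) = false by apply/negbTE; apply: contraNneq kJ => <-.
rewrite !ffunE jk; exact: (implyP (Ht j) jJ).
Qed.

Lemma swap_id1 n (a : 'I_n -> nat) k (c w : cell a) :
  swapc k w (swapc k c w) = w.
Proof. by apply/ffunP => i; rewrite !ffunE; case: (i == k). Qed.

Lemma swap_id2 n (a : 'I_n -> nat) k (c w : cell a) :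
  swapc k (swapc k c w) w = swapc k c w.
Proof. by apply/ffunP => i; rewrite !ffunE; case: (i == k). Qed.

Lemma swap_idA n (a : 'I_n -> nat) k (c s w : cell a) :
  swapc k (swapc k c s) w = swapc k c w.
Proof. by apply/ffunP => i; rewrite !ffunE; case: (i == k). Qed.

Lemma swap_idB n (a : 'I_n -> nat) k (c s w : cell a) :
  swapc k w (swapc k c s) = swapc k w s.
Proof. by apply/ffunP => i; rewrite !ffunE; case: (i == k). Qed.

Lemma swap_comm n (a : 'I_n -> nat) j k (c s t : cell a) : j != k ->
  swapc j t (swapc k c s) = swapc k c (swapc j t s).
Proof.
move=> jk; apply/ffunP => i; rewrite !ffunE.
case: (eqVneq i j) => [?|ij]; first by subst i; rewrite ?eqxx (negbTE jk).
by rewrite ?(negbTE ij).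
Qed.

Lemma swap_k n (a : 'I_n -> nat) j k (c s t : cell a) : j != k ->
  swapc j (swapc k c s) t = swapc j s t.
Proof.
move=> jk; apply/ffunP => i; rewrite !ffunE.
case: (eqVneq i j) => [?|ij]; first by subst i; rewrite ?eqxx (negbTE jk).
by rewrite ?(negbTE ij).
Qed.

Unset Implicit Arguments.
Theorem corollary6p2 (KK : fieldType) (n : nat) (a : 'I_n -> nat)
  (L K : {set 'I_n}) (Q : tabring KK a -> Prop) :
  L \proper K ->
  prime_ideal Q ->
  (forall p : tabring KK a,
     ideal_gen (fun q => margin_gens L q \/ minor_gens K q) p -> Q p) ->
  exists K' : {set 'I_n},
    [/\ L \subset K', K' \subset K, (#|K'| + 1)%N = #|K| &
        forall p : tabring KK a, ideal_gen (margin_gens K') p -> Q p].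
Proof.
move=> LK [Q0 QD QM Q1 Qp] HQ.
have LsK : L \subset K by move: LK; rewrite properE => /andP [].
have Qg : forall q, margin_gens L q \/ minor_gens K q -> Q q.
  move=> q Hq; apply: HQ; exists 1%N, (fun _ => 1), (fun _ => q); split => //.
  by rewrite big_ord1 mul1r.
have QN : forall x, Q x -> Q (- x) by move=> x Qx; rewrite -mulN1r; exact: QM.
have QB : forall x y, Q x -> Q y -> Q (x - y) by move=> x y Qx Qy; apply: QD => //; exact: QN.
have Qsum : forall (I : finType) (P : pred I) (F : I -> tabring KK a),
    (forall i, P i -> Q (F i)) -> Q (\sum_(i | P i) F i).
  by move=> I P F HF; apply: (big_ind Q) => //.
have Qr : forall x y, Q x -> Q (x * y) by move=> x y Qx; rewrite mulrC; exact: QM.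
have QnotM : forall x y, ~ Q x -> ~ Q y -> ~ Q (x * y) by move=> x y nx ny /Qp [].
have Qtrans : forall X Y, Q (X - Y) -> ~ Q Y -> ~ Q X.
  move=> X Y H nY QX; apply: nY.
  have -> : Y = X - (X - Y) by rewrite opprB addrC subrK.
  exact: QB.
have Qtrans2 : forall X Y, Q (X - Y) -> ~ Q X -> ~ Q Y.
  move=> X Y H nX QY; apply: nX.
  have -> : X = (X - Y) + Y by rewrite subrK.
  exact: QD.
pose b := fun s : cell a => margin_entry KK K s.
have Qmin : forall s t j, j \in K ->
    Q (b s * b t - b (swapc j s t) * b (swapc j t s)).
  move=> s t j jK; apply: Qg; right; exists s, t, j; split => //.
have R : forall (m : nat) (J : {set 'I_n}), J \subset K -> #|K :\: J| = m -> forall s t j, j \in J ->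
    Q (margin_entry KK J s * b t - margin_entry KK J (swapc j t s) * b (swapc j s t)).
  elim=> [|m IH] J JK.
    move/eqP; rewrite cards_eq0 setD_eq0 => KJ.
    have -> : J = K by apply/eqP; rewrite eqEsubset JK KJ.
    move=> s t j jK; rewrite [_ * b (swapc j s t)]mulrC; exact: Qmin.
  move=> cK s t j jJ.
  have [k kKJ] : exists k, k \in K :\: J by apply/set0Pn; rewrite -card_gt0 cK.
  move: (kKJ); rewrite in_setD => /andP [kJ kK].
  have cK1 : #|K :\: (k |: J)| = m.
    move: cK; rewrite (cardsD1 k (K :\: J)) kKJ add1n => -[<-].
    by rewrite setDDl setUC.
  have J1K : k |: J \subset K by rewrite subUset sub1set kK JK.
  have jk : j != k by apply: contraNneq kJ => <-.
  rewrite (margin_split KK s s kJ) (margin_split KK (swapc j t s) s kJ).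
  rewrite !mulr_suml -sumrB; apply: Qsum => c _.
  have := IH _ J1K cK1 (swapc k c s) t j (setU1r k jJ).
  by rewrite swap_comm // swap_k.
case: (classic (exists j, j \in K :\: L /\ forall s, Q (margin_entry KK (K :\ j) s))).
  move=> [j [jKL Hj]]; exists (K :\ j); split.
  - move: jKL; rewrite in_setD => /andP [jL jK].
    apply/subsetP => x xL; rewrite !inE (subsetP LsK x xL) andbT.
    by apply: contraNneq jL => <-.
  - exact: subD1set.
  - move: jKL; rewrite in_setD => /andP [_ jK].
    by rewrite (cardsD1 j K) jK addnC.
  - move=> p [m [c [g [Hg ->]]]]; apply: Qsum => i _; apply: QM.
    by case: (Hg i) => s ->; exact: Hj.
move=> Hno; exfalso.
have Hex : forall j, j \in K :\: L -> exists s, ~ Q (margin_entry KK (K :\ j) s).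
  move=> j jKL; apply: NNPP => H; apply: Hno; exists j; split => // s.
  by apply: NNPP => Hs; apply: H; exists s.
have [j0 j0KL] : exists j0, j0 \in K :\: L.
  apply/set0Pn; rewrite setD_eq0; by move: LK; rewrite properE => /andP [].
have j0K : j0 \in K by move: j0KL; rewrite in_setD => /andP [].
have nj0 : j0 \notin K :\ j0 by rewrite !inE eqxx.
have mK : forall j (s e : cell a), j \in K ->
    margin_entry KK (K :\ j) s = \sum_(c | agree_off j c e) b (swapc j c s).
  move=> j s e jK; rewrite (margin_split KK s e (_ : j \notin K :\ j)); last by rewrite !inE eqxx.
  by rewrite setD1K.
have [s0 ns0] := Hex j0 j0KL.
have [c0 hw] : exists c, ~ Q (b (swapc j0 c s0)).
  apply: NNPP => H; apply: ns0; rewrite (mK j0 s0 s0 j0K); apply: Qsum => c _.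
  by apply: NNPP => Hc; apply: H; exists c.
set w := swapc j0 c0 s0 in hw.
have hm : forall j, j \in K :\: L -> ~ Q (margin_entry KK (K :\ j) w).
  move=> j jKL; have jK : j \in K by move: jKL; rewrite in_setD => /andP [].
  have [s ns] := Hex j jKL.
  have H1 : ~ Q (margin_entry KK (K :\ j) s * b w) by exact: QnotM.
  have H2 : Q (margin_entry KK (K :\ j) s * b w - margin_entry KK (K :\ j) w * b (swapc j w s)).
    rewrite (mK j s s jK) (mK j w s jK) !mulr_suml -sumrB; apply: Qsum => c _.
    have := Qmin (swapc j c s) w j jK.
    by rewrite swap_idA swap_idB.
  have H3 := Qtrans2 _ _ H2 H1.
  by move=> Hq; apply: H3; exact: Qr.
have N : forall (m : nat) (J : {set 'I_n}), L \subset J -> J \subset K -> #|K :\: J| = m ->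
    ~ Q (margin_entry KK J w).
  elim=> [|m IH] J LJ JK.
    move/eqP; rewrite cards_eq0 setD_eq0 => KJ.
    by have -> : J = K by apply/eqP; rewrite eqEsubset JK KJ.
  move=> cK.
  have [k kKJ] : exists k, k \in K :\: J by apply/set0Pn; rewrite -card_gt0 cK.
  move: (kKJ); rewrite in_setD => /andP [kJ kK].
  have cK1 : #|K :\: (k |: J)| = m.
    move: cK; rewrite (cardsD1 k (K :\: J)) kKJ add1n => -[<-].
    by rewrite setDDl setUC.
  have J1K : k |: J \subset K by rewrite subUset sub1set kK JK.
  have LJ1 : L \subset k |: J by apply: subset_trans LJ _; exact: subsetU1.
  have kKL : k \in K :\: L.
    by rewrite in_setD kK andbT; apply: contraNN kJ => kL; exact: (subsetP LJ).
  have nY : ~ Q (margin_entry KK (k |: J) w * margin_entry KK (K :\ k) w).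
    by apply: QnotM; [exact: IH | exact: hm].
  have HX : Q (margin_entry KK J w * b w - margin_entry KK (k |: J) w * margin_entry KK (K :\ k) w).
    rewrite (margin_split KK w w kJ) (mK k w w kK) mulr_suml mulr_sumr -sumrB.
    apply: Qsum => c _.
    have := R _ _ J1K erefl (swapc k c w) w k (setU11 k J).
    by rewrite swap_id1 swap_id2.
  move=> Qm; exact: (Qtrans _ _ HX nY (Qr _ _ Qm)).
apply: (N _ L (subxx L) LsK erefl); apply: Qg; left; by exists w.
Qed.
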